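(* Let $p, p' > 1$ be real numbers with $\frac{1}{p}+\frac{1}{p'}=1$, and let $\mu,\nu$ be probability distributions on $S$ with $\nu(s)>0$ for all $s\in S$. For every joint stationary strategy $\boldsymbol{\pi}=(\pi^i,\boldsymbol\pi^{-i})$, every player $i\in\{1,\dots,N\}$ and every $v^i:S\to\mathbb{R}$, letting $\pi^i_*$ be a stationary best response of player $i$ to $\boldsymbol\pi^{-i}$ (i.e. $v^i_{\pi^i_*,\boldsymbol\pi^{-i}}=v^{*i}_{\boldsymbol\pi^{-i}}$, the fixed point of $\mathcal T^{*i}_{\boldsymbol\pi^{-i}}$), $$\big\|v^i_{\pi^i_*,\boldsymbol\pi^{-i}}-v^i_{\pi^i,\boldsymbol\pi^{-i}}\big\|_{\mu,p}\le \frac{1}{1-\gamma}\Big(C_\infty(\mu,\nu,(\pi^i_*,\boldsymbol\pi^{-i}))^{p'/p}+C_\infty(\mu,\nu,(\pi^i,\boldsymbol\pi^{-i}))^{p'/p}\Big)^{1/p'}\Big[\big\|\mathcal T^{*i}_{\boldsymbol\pi^{-i}}v^i-v^i\big\|_{\nu,p}^p+\big\|\mathcal T^i_{\boldsymbol\pi}v^i-v^i\big\|_{\nu,p}^p\Big]^{1/p}.$$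
   Context: An $N$-player Markov game has a finite state space $S$, finite nonempty action sets $A^i(s)$ for each player $i\in\{1,\dots,N\}$ and state $s$, rewards $r^i(s,\mathbf a)\in\mathbb{R}$ for joint actions $\mathbf a=(a^1,\dots,a^N)$, a transition kernel $p(s'|s,\mathbf a)$, and a discount factor $\gamma\in[0,1)$. We write $\mathbf a=(a^i,\mathbf a^{-i})$ where $\mathbf a^{-i}$ is the joint action of all players other than $i$. A stationary strategy $\pi^i$ of player $i$ assigns to each $s$ a probability distribution $\pi^i(\cdot|s)$ on $A^i(s)$; a joint strategy is $\boldsymbol\pi=(\pi^1,\dots,\pi^N)=(\pi^i,\boldsymbol\pi^{-i})$, with actions drawn independently across players. Define $\mathcal P_{\boldsymbol\pi}(s'|s)=E_{\mathbf a\sim\boldsymbol\pi(\cdot|s)}[p(s'|s,\mathbf a)]$, $r^i_{\boldsymbol\pi}(s)=E_{\mathbf a\sim\boldsymbol\pi(\cdot|s)}[r^i(s,\mathbf a)]$, $\mathcal P_{\boldsymbol\pi^{-i}}(s'|s,a^i)=E_{\mathbf a^{-i}\sim\boldsymbol\pi^{-i}(\cdot|s)}[p(s'|s,a^i,\mathbf a^{-i})]$, $r^i_{\boldsymbol\pi^{-i}}(s,a^i)=E_{\mathbf a^{-i}\sim\boldsymbol\pi^{-i}(\cdot|s)}[r^i(s,a^i,\mathbf a^{-i})]$. The value of $\boldsymbol\pi$ for player $i$ is $v^i_{\boldsymbol\pi}=(\mathcal I-\gamma\mathcal P_{\boldsymbol\pi})^{-1}r^i_{\boldsymbol\pi}$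 (vectors/matrices indexed by $S$, $\mathcal I$ the identity). The best-response value is $v^{*i}_{\boldsymbol\pi^{-i}}=\max_{\tilde\pi^i} v^i_{\tilde\pi^i,\boldsymbol\pi^{-i}}$ (pointwise maximum over stationary strategies of player $i$). For $v:S\to\mathbb R$, the Bellman operators are $\mathcal T^i_{\boldsymbol\pi}v(s)=r^i_{\boldsymbol\pi}(s)+\gamma\sum_{s'}\mathcal P_{\boldsymbol\pi}(s'|s)v(s')$ and $\mathcal T^{*i}_{\boldsymbol\pi^{-i}}v(s)=\max_{a^i\in A^i(s)}\big[r^i_{\boldsymbol\pi^{-i}}(s,a^i)+\gamma\sum_{s'}\mathcal P_{\boldsymbol\pi^{-i}}(s'|s,a^i)v(s')\big]$. For a distribution $\mu$ on $S$ and $f:S\to\mathbb R$, $\|f\|_{\mu,p}=(\sum_{s}\mu(s)|f(s)|^p)^{1/p}$. The concentrability coefficient of a joint strategy $\boldsymbol\pi$ is $C_\infty(\mu,\nu,\boldsymbol\pi)=\max_{s\in S}\frac{[(1-\gamma)\mu^T(\mathcal I-\gamma\mathcal P_{\boldsymbol\pi})^{-1}](s)}{\nu(s)}$ (the sup-norm of the Radon–Nikodym derivative of the distribution $(1-\gamma)\mu^T(\mathcal I-\gamma\mathcal P_{\boldsymbol\pi})^{-1}$ with respect to $\nu$). *)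

(* Defs.v *)
From mathcomp Require Import all_boot.
From Stdlib Require Import Reals ClassicalEpsilon.
Set Implicit Arguments.
Unset Strict Implicit.
Unset Printing Implicit Defensive.
Local Open Scope R_scope.

(* Real power for nonnegative bases: rpow x y = x^y for x > 0, and 0 for x <= 0
   (Stdlib's Rpower 0 y is 1, which is not the intended 0^y = 0 for y > 0). *)
Definition rpow (x y : R) : R := if Rle_dec x 0 then 0 else Rpower x y.

(* Maximum of a real function over a finite type (value 0 on an empty type,
   which never occurs below since all types involved are nonempty). *)
Definition fmax (T : finType) (F : T -> R) : R :=
  match enum T with
  | [::] => 0
  | x :: _ => \big[Rmax/F x]_(y : T) F y
  end.

Definition rsum (T : finType) (F : T -> R) : R := \big[Rplus/0]_(y : T) F y.

Definition jact (N : nat) (S : finType) (A : 'I_N -> S -> finType) (s : S) : finType :=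
  {dffun forall j : 'I_N, A j s}.

(* A (stationary) strategy for each player: pi j s a = probability that player j
   plays a in state s. A joint strategy is such a family over all players. *)
Definition jstrat (N : nat) (S : finType) (A : 'I_N -> S -> finType) : Type :=
  forall (j : 'I_N) (s : S), A j s -> R.

Definition is_strategy (N : nat) (S : finType) (A : 'I_N -> S -> finType)
  (j : 'I_N) (pij : forall s : S, A j s -> R) : Prop :=
  forall s : S, (forall a, 0 <= pij s a) /\ rsum (pij s) = 1.

Definition is_jstrategy (N : nat) (S : finType) (A : 'I_N -> S -> finType)
  (pi : jstrat A) : Prop := forall j : 'I_N, is_strategy (pi j).

Definition is_distr (S : finType) (mu : S -> R) : Prop :=
  (forall s, 0 <= mu s) /\ rsum mu = 1.

Section Game.
Variables (N : nat) (S : finType) (A : 'I_N -> S -> finType).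

Definition jprob (pi : jstrat A) (s : S) (a : jact A s) : R :=
  \big[Rmult/1]_(j : 'I_N) pi j s (a j).

Definition jprob_mi (i : 'I_N) (pi : jstrat A) (s : S) (a : jact A s) : R :=
  \big[Rmult/1]_(j : 'I_N | j != i) pi j s (a j).

Variables (r : 'I_N -> forall s : S, jact A s -> R)
          (p : forall s : S, jact A s -> S -> R) (gamma : R).

Definition Ppi (pi : jstrat A) (s s' : S) : R :=
  rsum (fun a : jact A s => jprob pi a * p a s').
Definition rpi (i : 'I_N) (pi : jstrat A) (s : S) : R :=
  rsum (fun a : jact A s => jprob pi a * r i a).

Definition Pmi (i : 'I_N) (pi : jstrat A) (s : S) (ai : A i s) (s' : S) : R :=
  \big[Rplus/0]_(a : jact A s | a i == ai) (jprob_mi i pi a * p a s').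
Definition rmi (i : 'I_N) (pi : jstrat A) (s : S) (ai : A i s) : R :=
  \big[Rplus/0]_(a : jact A s | a i == ai) (jprob_mi i pi a * r i a).

Definition IgP (pi : jstrat A) (s s' : S) : R :=
  (if s == s' then 1 else 0) - gamma * Ppi pi s s'.

Definition mxmul (M M' : S -> S -> R) (s s' : S) : R :=
  rsum (fun t => M s t * M' t s').
Definition mxid (s s' : S) : R := if s == s' then 1 else 0.

Definition resolvent (pi : jstrat A) : S -> S -> R :=
  epsilon (inhabits (fun _ _ : S => 0))
    (fun M => mxmul M (IgP pi) = mxid /\ mxmul (IgP pi) M = mxid).

Definition value (i : 'I_N) (pi : jstrat A) (s : S) : R :=
  rsum (fun t => resolvent pi s t * rpi i pi t).

Definition Tpi (i : 'I_N) (pi : jstrat A) (v : S -> R) (s : S) : R :=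
  rpi i pi s + gamma * rsum (fun s' => Ppi pi s s' * v s').
Definition Tstar (i : 'I_N) (pi : jstrat A) (v : S -> R) (s : S) : R :=
  fmax (fun ai : A i s => rmi pi ai + gamma * rsum (fun s' => Pmi pi ai s' * v s')).

Definition Cinf (mu nu : S -> R) (pi : jstrat A) : R :=
  fmax (fun s => (1 - gamma) * rsum (fun t => mu t * resolvent pi t s) / nu s).

End Game.

Definition normp (S : finType) (mu : S -> R) (q : R) (f : S -> R) : R :=
  rpow (rsum (fun s => mu s * rpow (Rabs (f s)) q)) (1 / q).

(* Main.v *)
Require Import Defs.
From mathcomp Require Import all_boot.
From Stdlib Require Import Reals.
From Stdlib Require Import Lra ClassicalEpsilon FunctionalExtensionality.
From mathcomp Require Import ssralg matrix Rstruct.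
Local Open Scope R_scope.

Lemma rpow_ge0 x y : 0 <= rpow x y.
Proof. rewrite /rpow; case: (Rle_dec x 0) => h /=; [lra|]. rewrite /Rpower; left; exact: exp_pos. Qed.

Lemma rpow_pos x y : 0 < x -> rpow x y = Rpower x y.
Proof. move=> hx; rewrite /rpow; case: Rle_dec => //= h; lra. Qed.

Lemma rpow_gt0 x y : 0 < x -> 0 < rpow x y.
Proof. move=> hx; rewrite rpow_pos //; exact: exp_pos. Qed.

Lemma rpow0 y : rpow 0 y = 0.
Proof. rewrite /rpow; case: Rle_dec => //= h; lra. Qed.

Lemma rpow_mul x y z : 0 <= x -> 0 <= y -> rpow (x * y) z = rpow x z * rpow y z.
Proof.
move=> hx hy; case: (Req_dec x 0) => [->|hx0]; first by rewrite Rmult_0_l rpow0 Rmult_0_l.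
case: (Req_dec y 0) => [->|hy0]; first by rewrite Rmult_0_r rpow0 Rmult_0_r.
have hx' : 0 < x by lra. have hy' : 0 < y by lra.
rewrite !rpow_pos //; last exact: Rmult_lt_0_compat.
by rewrite Rpower_mult_distr.
Qed.

Lemma rpow_rpow x a b : 0 <= x -> rpow (rpow x a) b = rpow x (a * b).
Proof.
move=> hx; case: (Req_dec x 0) => [->|hx0]; first by rewrite !rpow0.
have hx' : 0 < x by lra.
rewrite (@rpow_pos x a hx') rpow_pos; last exact: exp_pos.
by rewrite Rpower_mult rpow_pos.
Qed.

Lemma rpow_plus x a b : 0 < x -> rpow x (a + b) = rpow x a * rpow x b.
Proof. by move=> hx; rewrite !rpow_pos // Rpower_plus. Qed.

Lemma rpow_1 x : 0 <= x -> rpow x 1 = x.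
Proof.
move=> hx; case: (Req_dec x 0) => [->|hx0]; first by rewrite rpow0.
by rewrite rpow_pos ?Rpower_1 //; lra.
Qed.

Lemma rpow_opp x a : 0 < x -> rpow x (- a) = / rpow x a.
Proof. by move=> hx; rewrite !rpow_pos // Rpower_Ropp. Qed.

Lemma rpow_le x y z : 0 <= x -> x <= y -> 0 <= z -> rpow x z <= rpow y z.
Proof.
move=> hx hxy hz; case: (Req_dec x 0) => [->|hx0]; first by rewrite rpow0; exact: rpow_ge0.
rewrite !rpow_pos; try lra. apply: Rle_Rpower_l => //; lra.
Qed.

Lemma bernoulli z q : 0 <= z -> 1 <= q -> 1 + q * (z - 1) <= rpow z q.
Proof.
move=> hz hq; case: (Req_dec z 0) => [->|hz0]; first by rewrite rpow0; nra.
have hz' : 0 < z by lra.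
rewrite rpow_pos // /Rpower.
set u := q * ln z.
set a := / q.
have ha : 0 < a by apply: Rinv_0_lt_compat; lra.
have ha1 : a <= 1 by rewrite /a -Rinv_1; apply: Rinv_le_contravar; lra.
have hqa : q * a = 1 by rewrite /a; field; lra.
have hE : exp (a * u) = z by rewrite /u -Rmult_assoc (Rmult_comm a) hqa Rmult_1_l exp_ln.
have e1 : exp u = exp (a * u) * exp ((1 - a) * u) by rewrite -exp_plus; f_equal; ring.
have e2 : 1 = exp (a * u) * exp (- (a * u)) by rewrite -exp_plus Rplus_opp_r exp_0.
have i1 := exp_ineq1_le ((1 - a) * u).
have i2 := exp_ineq1_le (- (a * u)).
rewrite hE in e1 e2.
have key : z <= a * exp u + (1 - a).
  have h1 : z * (1 + (1 - a) * u) <= exp u by rewrite e1; apply: Rmult_le_compat_l; lra.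
  have h2 : z * (1 + - (a * u)) <= 1 by rewrite {2}e2; apply: Rmult_le_compat_l; lra.
  nra.
have : q * z <= q * (a * exp u + (1 - a)) by apply: Rmult_le_compat_l; lra.
have -> : q * (a * exp u + (1 - a)) = exp u + q - 1.
  have -> : q * (a * exp u + (1 - a)) = (q * a) * exp u + q - q * a by ring.
  rewrite hqa; ring.
lra.
Qed.
Section S.
Variable T : finType.
Lemma rsum_le (F G : T -> R) : (forall t, F t <= G t) -> rsum F <= rsum G.
Proof. move=> h; rewrite /rsum; apply: (big_ind2 (fun a b => a <= b)) => //; [lra| move=> *; lra]. Qed.
Lemma rsum_ge0 (F : T -> R) : (forall t, 0 <= F t) -> 0 <= rsum F.
Proof. move=> h; rewrite /rsum; apply: (big_ind (fun a => 0 <= a)) => //; [lra| move=> *; lra]. Qed.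
Lemma rsumD (F G : T -> R) : rsum (fun t => F t + G t) = rsum F + rsum G.
Proof. by rewrite /rsum big_split. Qed.
Lemma rsumZ c (F : T -> R) : rsum (fun t => c * F t) = c * rsum F.
Proof. by rewrite /rsum big_distrr. Qed.
Lemma rsum_ext (F G : T -> R) : (forall t, F t = G t) -> rsum F = rsum G.
Proof. by move=> h; rewrite /rsum; apply: eq_bigr => t _; apply h. Qed.
End S.
Lemma rsum_swap (T U : finType) (F : T -> U -> R) : rsum (fun t => rsum (fun u => F t u)) = rsum (fun u => rsum (fun t => F t u)).
Proof. by rewrite /rsum exchange_big. Qed.
Arguments rsum_le {T F G}.
Arguments rsum_ge0 {T F}.
Arguments rsumD {T}.
Arguments rsumZ {T}.
Arguments rsum_ext {T F G}.

Lemma tangent y m q : 0 <= y -> 0 < m -> 1 <= q ->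
  rpow m q * (1 + q * (y / m - 1)) <= rpow y q.
Proof.
move=> hy hm hq.
have hym : 0 <= y / m by apply: Rmult_le_pos => //; left; apply: Rinv_0_lt_compat.
have -> : rpow y q = rpow m q * rpow (y / m) q.
  rewrite -rpow_mul; [|lra|done]. f_equal. field. lra.
apply: Rmult_le_compat_l; first exact: rpow_ge0.
exact: bernoulli.
Qed.

Lemma jensen (T : finType) (w y : T -> R) q : 1 <= q ->
  (forall t, 0 <= w t) -> rsum w = 1 -> (forall t, 0 <= y t) ->
  rpow (rsum (fun t => w t * y t)) q <= rsum (fun t => w t * rpow (y t) q).
Proof.
move=> hq hw hw1 hy.
set m := rsum _.
have hm : 0 <= m by apply: rsum_ge0 => t; apply: Rmult_le_pos.
case: (Req_dec m 0) => [->|hm0].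
  rewrite rpow0; apply: rsum_ge0 => t; apply: Rmult_le_pos => //; exact: rpow_ge0.
have hm' : 0 < m by lra.
apply: (Rle_trans _ _ _ _ (rsum_le (fun t => Rmult_le_compat_l _ _ _ (hw t) (@tangent _ m q (hy t) hm' hq)))).
have e : forall t, w t * (rpow m q * (1 + q * (y t / m - 1))) =
    (rpow m q * (1 - q)) * w t + (rpow m q * q / m) * (w t * y t).
  by move=> t; field; lra.
rewrite (rsum_ext e) rsumD !rsumZ hw1 -/m. right; field; lra.
Qed.

Lemma rpow_inv y q : 0 < y -> rpow (/ y) q = / rpow y q.
Proof.
move=> hy; rewrite !rpow_pos //; last exact: Rinv_0_lt_compat.
by rewrite /Rpower ln_Rinv // -exp_Ropp; f_equal; ring.
Qed.

Lemma rpow_div x y q : 0 <= x -> 0 < y -> rpow (x / y) q = rpow x q / rpow y q.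
Proof.
move=> hx hy; rewrite /Rdiv rpow_mul // ?rpow_inv //; left; exact: Rinv_0_lt_compat.
Qed.

Lemma two_point x y c1 c2 q q' : 0 <= x -> 0 <= y -> 0 < c1 -> 0 < c2 ->
  1 < q -> 1 < q' -> 1 / q + 1 / q' = 1 ->
  rpow (x + y) q <= rpow (rpow c1 (q' / q) + rpow c2 (q' / q)) (q - 1)
                    * (rpow x q / c1 + rpow y q / c2).
Proof.
move=> hx hy hc1 hc2 hq hq' hqq.
set e := q' / q.
have he : q' = e + 1.
  have : q' * (1 / q + 1 / q') = q' by rewrite hqq; ring.
  rewrite /e; move=> h; rewrite -{1}h; field; lra.
have heq : e * q = q' by rewrite /e; field; lra.
set a := rpow c1 e. set b := rpow c2 e.
have ha : 0 < a by exact: rpow_gt0.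
have hb : 0 < b by exact: rpow_gt0.
set K := a + b.
have hK : 0 < K by rewrite /K; lra.
have haq : rpow a q = a * c1.
  rewrite /a rpow_rpow; last lra. by rewrite heq he rpow_plus // rpow_1 //; lra.
have hbq : rpow b q = b * c2.
  rewrite /b rpow_rpow; last lra. by rewrite heq he rpow_plus // rpow_1 //; lra.
have hKq : rpow K q = rpow K (q - 1) * K.
  have := @rpow_plus K (q - 1) 1 hK; rewrite rpow_1; last lra.
  by have -> : q - 1 + 1 = q by ring.
have hKq1 : 0 < rpow K (q - 1) by exact: rpow_gt0.
pose w (t : bool) := if t then a / K else b / K.
pose z (t : bool) := if t then x / (a / K) else y / (b / K).
have hw : forall t, 0 <= w t.
  by case; rewrite /w; left; apply: Rdiv_lt_0_compat.
have hw1 : rsum w = 1 by rewrite /rsum big_bool /w /= /K; field; lra.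
have hz : forall t, 0 <= z t.
  case; rewrite /z; apply: Rmult_le_pos => //; left; apply: Rinv_0_lt_compat;
  apply: Rdiv_lt_0_compat => //.
have J := @jensen _ w z q ltac:(lra) hw hw1 hz.
rewrite /rsum !big_bool /w /z /= in J.
rewrite (_ : a / K * (x / (a / K)) + b / K * (y / (b / K)) = x + y) in J; last by field; split; lra.
have hak : 0 < a / K by apply: Rdiv_lt_0_compat.
have hbk : 0 < b / K by apply: Rdiv_lt_0_compat.
rewrite !rpow_div // ?haq ?hbq ?hKq in J; try lra.
apply: (Rle_trans _ _ _ J); right; field; repeat split; lra.
Qed.

Lemma le_bigmax (T : finType) (f : T -> R) z (x : T) :
  f x <= \big[Rmax/z]_(y : T) f y.
Proof.
rewrite /index_enum; have : x \in (Finite.enum T) by rewrite -enumT mem_enum.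
elim: (Finite.enum T) => [//|a l IH]; rewrite inE big_cons => /orP [/eqP ->|h].
  exact: Rmax_l.
apply: Rle_trans (IH h) _; exact: Rmax_r.
Qed.

Lemma le_fmax (T : finType) (f : T -> R) (x : T) : f x <= fmax f.
Proof.
rewrite /fmax; case E: (enum T) => [|a l].
  have : x \in enum T by rewrite mem_enum.
  by rewrite E.
exact: le_bigmax.
Qed.

Lemma exists_min (T : finType) (f : T -> R) (t0 : T) : exists s0, forall s, f s0 <= f s.
Proof.
have [s0 hs0] : exists s0, \big[Rmin/f t0]_(y : T) f y = f s0.
  apply: (big_ind (fun v => exists s, v = f s)); first by exists t0.
    move=> a b [sa ->] [sb ->]; apply: (Rmin_case (f sa) (f sb) (fun v => exists s, v = f s)); eauto.
  move=> s _; eauto.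
exists s0 => s; rewrite -hs0.
rewrite /index_enum; have : s \in (Finite.enum T) by rewrite -enumT mem_enum.
elim: (Finite.enum T) => [//|a l IH]; rewrite inE big_cons => /orP [/eqP ->|h].
  exact: Rmin_l.
apply: Rle_trans _ (IH h); exact: Rmin_r.
Qed.

Lemma rsum_delta (T : finType) (s : T) (f : T -> R) :
  rsum (fun t => (if s == t then 1 else 0) * f t) = f s.
Proof.
rewrite /rsum (bigD1 s) //= eqxx big1 ?Rplus_0_r ?Rmult_1_l // => t /negbTE.
by rewrite eq_sym => ->; rewrite Rmult_0_l.
Qed.

Section Res.
Variables (S : finType) (P : S -> S -> R) (gamma : R).
Hypotheses (hP0 : forall s t, 0 <= P s t) (hP1 : forall s, rsum (P s) = 1)
  (hg0 : 0 <= gamma) (hg1 : gamma < 1).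
Definition Bm (s t : S) : R := @mxid S s t - gamma * P s t.

Lemma mxmul_assoc (M M' : S -> S -> R) (w : S -> R) s :
  rsum (fun u => M s u * rsum (fun t => M' u t * w t)) = rsum (fun t => mxmul M M' s t * w t).
Proof.
rewrite /mxmul.
transitivity (rsum (fun u => rsum (fun t => M s u * M' u t * w t))).
  apply: rsum_ext => u; rewrite -rsumZ; apply: rsum_ext => t; ring.
rewrite rsum_swap; apply: rsum_ext => t; rewrite Rmult_comm -rsumZ; apply: rsum_ext => u; ring.
Qed.

Lemma res_cancel M : mxmul M Bm = @mxid S -> forall w s,
  rsum (fun u => M s u * rsum (fun t => Bm u t * w t)) = w s.
Proof. by move=> hM w s; rewrite mxmul_assoc hM /mxid rsum_delta. Qed.

Lemma Bm_const c s : rsum (fun t => Bm s t * c) = (1 - gamma) * c.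
Proof.
have e : forall t, Bm s t * c = (if s == t then 1 else 0) * c + (- gamma * c) * P s t.
  by move=> t; rewrite /Bm /mxid; ring.
by rewrite (rsum_ext e) rsumD rsumZ rsum_delta hP1; ring.
Qed.

Lemma res_rowsum M : mxmul M Bm = @mxid S -> forall s, rsum (M s) = 1 / (1 - gamma).
Proof.
move=> hM s; have := @res_cancel M hM (fun _ => 1 / (1 - gamma)) s.
under [X in X = _ -> _]rsum_ext => u do rewrite Bm_const.
move=> <-; apply: rsum_ext => u; field; lra.
Qed.

Lemma res_nonneg M : mxmul Bm M = @mxid S -> forall y, (forall t, 0 <= y t) ->
  forall s, 0 <= rsum (fun t => M s t * y t).
Proof.
move=> hM y hy s.
pose x s := rsum (fun t => M s t * y t).
have hx : forall s, rsum (fun u => Bm s u * x u) = y s.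
  by move=> s'; rewrite /x mxmul_assoc hM /mxid rsum_delta.
have [s0 hs0] := @exists_min _ x s.
suff : 0 <= x s0 by move=> h; apply: Rle_trans h (hs0 s).
apply: Rnot_lt_le => hneg.
have h1 : x s0 <= rsum (fun u => P s0 u * x u).
  rewrite -[X in X <= _]Rmult_1_l -(hP1 s0) /rsum big_distrl /=.
  apply: rsum_le => u; apply: Rmult_le_compat_l => //.
have h2 := hx s0.
have e : forall u, Bm s0 u * x u = (if s0 == u then 1 else 0) * x u + (- gamma) * (P s0 u * x u).
  by move=> u; rewrite /Bm /mxid; ring.
rewrite (rsum_ext e) rsumD rsumZ rsum_delta in h2.
have := hy s0; nra.
Qed.

End Res.
Arguments Bm {S}.
Arguments res_nonneg {S P gamma} hP0 hP1 hg0 hg1 {M} _ y _ s.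
Arguments res_rowsum {S P gamma} hP1 hg1 {M} _ s.
Arguments res_cancel {S P gamma M} _ w s.

Module Ex5.
Import GRing.Theory.

Lemma rsum_abs (T : finType) (F : T -> R) : Rabs (rsum F) <= rsum (fun t => Rabs (F t)).
Proof.
rewrite /rsum; apply: (big_ind2 (fun a b => Rabs a <= b)).
- by rewrite Rabs_R0; lra.
- move=> a b c d h1 h2; apply: Rle_trans (Rabs_triang _ _) _; lra.
- move=> t _; lra.
Qed.

Lemma rsum_eq0 (T : finType) (F : T -> R) : (forall t, 0 <= F t) -> rsum F <= 0 -> forall t, F t = 0.
Proof.
move=> h0 hs t; apply: Rle_antisym => //.
apply: Rle_trans hs; rewrite /rsum (bigD1 t) //=.
have : 0 <= \big[Rplus/0]_(i | i != t) F i by apply: (big_ind (fun a => 0 <= a)) => //; [lra|move=> *; lra].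
lra.
Qed.

Section Ex.
Variables (S : finType) (P : S -> S -> R) (gamma : R).
Hypotheses (hP0 : forall s t, 0 <= P s t) (hP1 : forall s, rsum (P s) = 1)
  (hg0 : 0 <= gamma) (hg1 : gamma < 1).

Lemma Bm_inj (x : S -> R) : (forall t, rsum (fun s => x s * Bm P gamma s t) = 0) -> forall s, x s = 0.
Proof.
move=> hx.
have e : forall t, x t = gamma * rsum (fun s => x s * P s t).
  move=> t; have := hx t.
  have e : forall s, x s * Bm P gamma s t = (if t == s then 1 else 0) * x s + (- gamma) * (x s * P s t).
    by move=> s; rewrite /Bm /mxid eq_sym; case: eqP => _; ring.
  rewrite (rsum_ext e) rsumD rsumZ rsum_delta; lra.
have h1 : forall t, Rabs (x t) <= gamma * rsum (fun s => Rabs (x s) * P s t).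
  move=> t; rewrite {1}e Rabs_mult Rabs_right; last lra.
  apply: Rmult_le_compat_l => //; apply: Rle_trans (rsum_abs _ _) _.
  apply: rsum_le => s; rewrite Rabs_mult (Rabs_right (P s t)); [lra|by apply: Rle_ge].
have h2 : rsum (fun t => Rabs (x t)) <= gamma * rsum (fun s => Rabs (x s)).
  apply: Rle_trans (rsum_le h1) _; rewrite rsumZ rsum_swap; right; f_equal.
  apply: rsum_ext => s; rewrite rsumZ hP1; ring.
have h3 : 0 <= rsum (fun t => Rabs (x t)) by apply: rsum_ge0 => t; apply: Rabs_pos.
have h4 : rsum (fun t => Rabs (x t)) <= 0 by nra.
move=> s; have := @rsum_eq0 _ _ (fun t => Rabs_pos (x t)) h4 s.
move=> h; case: (Req_dec (x s) 0) => // hn; exfalso; exact: (Rabs_no_R0 _ hn h).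
Qed.

Lemma sum_ord_rsum (F : 'I_#|S| -> R) : (\sum_i F i)%R = rsum (fun s => F (enum_rank s)).
Proof.
rewrite /rsum (reindex (@enum_rank S)) //.
by exists (@enum_val S S) => x _; [rewrite enum_rankK | rewrite enum_valK].
Qed.

Definition Bx : 'M[R]_#|S| := \matrix_(i, j) Bm P gamma (enum_val i) (enum_val j).

Lemma Bx_unit : Bx \in unitmx.
Proof.
rewrite unitmxE unitfE; apply/det0P => -[v nv0 vB0]; move/negP: nv0; apply.
apply/eqP/rowP => j; rewrite !mxE.
have hx := @Bm_inj (fun s => v ord0 (enum_rank s)).
rewrite -(enum_valK j); apply: hx => t.
have := congr1 (fun A : 'M_(1, #|S|) => A ord0 (enum_rank t)) vB0.
rewrite /= !mxE sum_ord_rsum => h.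
have -> : (0 : R) = 0%R by [].
rewrite -h; apply: rsum_ext => s.
by rewrite /Bx mxE !enum_rankK.
Qed.

Lemma res_exists : exists M, mxmul M (Bm P gamma) = @mxid S /\ mxmul (Bm P gamma) M = @mxid S.
Proof.
exists (fun s t => invmx Bx (enum_rank s) (enum_rank t)).
have hid : forall s t, ((1%:M)%R : 'M[R]_#|S|) (enum_rank s) (enum_rank t) = mxid s t.
  move=> s t; rewrite mxE /mxid (inj_eq enum_rank_inj); by case: (s == t).
split; apply: functional_extensionality => s; apply: functional_extensionality => t.
- rewrite -hid -(mulVmx Bx_unit) mxE sum_ord_rsum /mxmul; apply: rsum_ext => u.
  by rewrite /Bx mxE !enum_rankK.
- rewrite -hid -(mulmxV Bx_unit) mxE sum_ord_rsum /mxmul; apply: rsum_ext => u.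
  by rewrite /Bx mxE !enum_rankK.
Qed.
End Ex.

End Ex5.
Import Ex5.

Lemma sum_prod_dffun (I : finType) (T_ : I -> finType) (f : forall i, T_ i -> R) :
  \big[Rplus/0]_(a : {dffun forall i, T_ i}) \big[Rmult/1]_(i : I) f i (a i)
  = \big[Rmult/1]_(i : I) \big[Rplus/0]_(x : T_ i) f i x.
Proof.
rewrite (reindex (@dffun_of_fprod I T_)); last first.
  by exists (@fprod_of_dffun I T_) => x _; [rewrite dffun_of_fprodK | rewrite fprod_of_dffunK].
pose P_ i := [ffun x : T_ i => f i x].
transitivity (\big[Rplus/0]_(t : fprod T_) \big[Rmult/1]_(i in I) P_ i (t i)).
  by apply: eq_bigr => t _; apply: eq_bigr => i _; rewrite /P_ !ffunE.
rewrite big_fprod.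
transitivity (\big[Rmult/1]_(i : I) \big[Rplus/0]_(x in tagged_with T_ i) untag 0 (P_ i) x); last first.
  apply: eq_bigr => i _; rewrite big_tag; apply: eq_bigr => x _.
  have -> : (P_ i : T_ i -> R) = f i by apply: functional_extensionality => y; rewrite /P_ ffunE.
  done.
rewrite bigA_distr_big_dep.
done.
Qed.

Section G.
Variables (N : nat) (S : finType) (A : 'I_N -> S -> finType).
Variables (r : 'I_N -> forall s : S, jact A s -> R)
  (p : forall s : S, jact A s -> S -> R) (gamma : R).
Hypotheses (Hp : forall (s : S) (a : jact A s), is_distr (p s a))
  (hg0 : 0 <= gamma) (hg1 : gamma < 1).

Lemma jprob_ge0 (sg : jstrat A) : is_jstrategy sg -> forall s (a : jact A s), 0 <= jprob sg a.
Proof.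
move=> hpi s a; rewrite /jprob; apply: (big_ind (fun x => 0 <= x)); [lra|move=> *; exact: Rmult_le_pos|].
move=> j _; exact: ((hpi j s).1).
Qed.

Lemma jprob_sum1 (sg : jstrat A) : is_jstrategy sg -> forall s, rsum (fun a : jact A s => jprob sg a) = 1.
Proof.
move=> hpi s.
have := @sum_prod_dffun _ (fun j => A j s) (fun j (x : A j s) => sg j s x).
move=> h; rewrite /rsum /jprob h.
apply: big1 => j _; exact: ((hpi j s).2).
Qed.

Lemma Ppi_ge0 (sg : jstrat A) : is_jstrategy sg -> forall s t, 0 <= Ppi p sg s t.
Proof.
move=> hpi s t; apply: rsum_ge0 => a; apply: Rmult_le_pos; [exact: jprob_ge0|exact: ((Hp _ a).1)].
Qed.

Lemma Ppi_sum1 (sg : jstrat A) : is_jstrategy sg -> forall s, rsum (Ppi p sg s) = 1.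
Proof.
move=> hpi s; rewrite /Ppi.
rewrite (@rsum_swap _ _ (fun s' a => jprob sg a * p s a s')).
rewrite -(@jprob_sum1 sg hpi s); apply: rsum_ext => a.
by rewrite rsumZ (Hp _ a).2 Rmult_1_r.
Qed.

Lemma res_spec (sg : jstrat A) : is_jstrategy sg ->
  mxmul (resolvent p gamma sg) (Bm (Ppi p sg) gamma) = @mxid S /\
  mxmul (Bm (Ppi p sg) gamma) (resolvent p gamma sg) = @mxid S.
Proof.
move=> hpi.
exact: (@epsilon_spec _ (inhabits (fun _ _ : S => 0))
  (fun M => mxmul M (IgP p gamma sg) = @mxid S /\ mxmul (IgP p gamma sg) M = @mxid S)
  (@res_exists S (Ppi p sg) gamma (@Ppi_ge0 sg hpi) (@Ppi_sum1 sg hpi) hg0 hg1)).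
Qed.

Lemma value_diff (i : 'I_N) (sg : jstrat A) : is_jstrategy sg -> forall (v : S -> R) s,
  value r p gamma i sg s - v s =
  rsum (fun t => resolvent p gamma sg s t * (Tpi r p gamma i sg v t - v t)).
Proof.
move=> hpi v s; have [hMB hBM] := @res_spec sg hpi.
rewrite -(res_cancel hMB (fun t => value r p gamma i sg t - v t) s).
apply: rsum_ext => u; f_equal.
have e : forall t, Bm (Ppi p sg) gamma u t * (value r p gamma i sg t - v t) =
   Bm (Ppi p sg) gamma u t * value r p gamma i sg t +
   ((- 1) * ((if u == t then 1 else 0) * v t) + gamma * (Ppi p sg u t * v t)).
  by move=> t; rewrite /Bm /mxid; ring.
rewrite (rsum_ext e) rsumD rsumD !rsumZ rsum_delta.
rewrite /value mxmul_assoc hBM /mxid rsum_delta /Tpi; ring.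
Qed.

End G.
Arguments res_spec {N S A p gamma} _ _ _ {sg} _.
Arguments Ppi_ge0 {N S A p} Hp {sg} _ s t.
Arguments Ppi_sum1 {N S A p} Hp {sg} _ s.
Arguments value_diff {N S A r p gamma} _ _ _ i {sg} _ v s.

Section G2.
Variables (N : nat) (S : finType) (A : 'I_N -> S -> finType).
Variables (r : 'I_N -> forall s : S, jact A s -> R)
  (p : forall s : S, jact A s -> S -> R) (gamma : R).
Variables (sg pistar : jstrat A) (i : 'I_N).
Hypotheses (Hpistar : is_jstrategy pistar)
  (Hpistar_mi : forall j : 'I_N, j != i -> pistar j = sg j).

Lemma Tpi_le_Tstar (v : S -> R) s : Tpi r p gamma i pistar v s <= Tstar r p gamma i sg v s.
Proof.
pose H (a : jact A s) := r i s a + gamma * rsum (fun s' => p s a s' * v s').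
pose X (ai : A i s) := rmi r sg ai + gamma * rsum (fun s' => Pmi p sg ai s' * v s').
have e1 : Tpi r p gamma i pistar v s = rsum (fun a : jact A s => jprob pistar a * H a).
  rewrite /Tpi /rpi /Ppi /H.
  have e : forall a : jact A s, jprob pistar a * (r i s a + gamma * rsum (fun s' => p s a s' * v s'))
     = jprob pistar a * r i s a + gamma * rsum (fun s' => jprob pistar a * p s a s' * v s').
    by move=> a; rewrite -rsumZ Rmult_plus_distr_l -rsumZ -rsumZ; f_equal; apply: rsum_ext => t; ring.
  rewrite (rsum_ext e) rsumD rsumZ; f_equal; f_equal.
  rewrite (@rsum_swap _ _ (fun a s' => jprob pistar a * p s a s' * v s')).
  apply: rsum_ext => t; rewrite Rmult_comm -rsumZ; apply: rsum_ext => a; ring.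
have e2 : forall a : jact A s, jprob pistar a = pistar i s (a i) * jprob_mi i sg a.
  move=> a; rewrite /jprob /jprob_mi (bigD1 i) //=; f_equal.
  by apply: eq_bigr => j hj; rewrite Hpistar_mi.
have e3 : rsum (fun a : jact A s => jprob pistar a * H a) = rsum (fun ai => pistar i s ai * X ai).
  rewrite /rsum (partition_big (fun a : jact A s => a i) xpredT) //.
  apply: eq_bigr => ai _.
  rewrite /X /rmi /Pmi.
  transitivity (pistar i s ai * \big[Rplus/0]_(a : jact A s | a i == ai) (jprob_mi i sg a * H a)).
    rewrite big_distrr /=; apply: eq_bigr => a /eqP hai; rewrite e2 hai; ring.
  f_equal; rewrite /H.
  have e : forall a : jact A s, jprob_mi i sg a * (r i s a + gamma * rsum (fun s' => p s a s' * v s'))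
     = jprob_mi i sg a * r i s a + gamma * rsum (fun s' => jprob_mi i sg a * p s a s' * v s').
    by move=> a; rewrite -rsumZ Rmult_plus_distr_l -rsumZ -rsumZ; f_equal; apply: rsum_ext => t; ring.
  rewrite (eq_bigr _ (fun a _ => e a)) big_split /=; f_equal.
  rewrite -big_distrr /=; f_equal; rewrite /rsum exchange_big /=.
  apply: eq_bigr => t _; rewrite big_distrl /=; apply: eq_bigr => a _; ring.
rewrite e1 e3.
apply: Rle_trans (_ : rsum (fun ai => pistar i s ai * fmax X) <= _).
  apply: rsum_le => ai; apply: Rmult_le_compat_l; first exact: ((Hpistar i s).1).
  exact: le_fmax.
rewrite (rsum_ext (fun ai => Rmult_comm _ _)) rsumZ ((Hpistar i s).2) Rmult_1_r.
by right.
Qed.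
End G2.
Arguments Tpi_le_Tstar {N S A r p gamma sg pistar i} Hpistar Hpistar_mi v s.

Section G3.
Variables (N : nat) (S : finType) (A : 'I_N -> S -> finType).
Variables (r : 'I_N -> forall s : S, jact A s -> R)
  (p : forall s : S, jact A s -> S -> R) (gamma : R).
Hypotheses (Hp : forall (s : S) (a : jact A s), is_distr (p s a))
  (hg0 : 0 <= gamma) (hg1 : gamma < 1).
Variables (mu nu : S -> R) (q : R).
Hypotheses (Hmu : is_distr mu) (Hnu : is_distr nu) (Hnupos : forall s, 0 < nu s) (hq : 1 <= q).

Lemma res_entry_ge0 (sg : jstrat A) : is_jstrategy sg -> forall s t, 0 <= resolvent p gamma sg s t.
Proof.
move=> hs s t; have [_ hBM] := res_spec Hp hg0 hg1 hs.
have := res_nonneg (Ppi_ge0 Hp hs) (Ppi_sum1 Hp hs) hg0 hg1 hBM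
  (fun u => if t == u then 1 else 0) ltac:(move=> u /=; case: (t == u); lra) s.
have e : forall u, resolvent p gamma sg s u * (if t == u then 1 else 0) =
  (if t == u then 1 else 0) * resolvent p gamma sg s u by move=> u; ring.
by rewrite (rsum_ext e) rsum_delta.
Qed.

Lemma res_sum (sg : jstrat A) : is_jstrategy sg -> forall s, rsum (resolvent p gamma sg s) = 1 / (1 - gamma).
Proof.
move=> hs s; have [hMB _] := res_spec Hp hg0 hg1 hs.
exact: (res_rowsum (Ppi_sum1 Hp hs) hg1 hMB).
Qed.

Lemma part (sg : jstrat A) : is_jstrategy sg -> forall g : S -> R,
  0 < Cinf p gamma mu nu sg /\
  rsum (fun s => mu s * rpow ((1 - gamma) * rsum (fun t => resolvent p gamma sg s t * Rabs (g t))) q)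
  <= Cinf p gamma mu nu sg * rsum (fun t => nu t * rpow (Rabs (g t)) q).
Proof.
move=> hs g.
set Rs := resolvent p gamma sg.
set C := Cinf p gamma mu nu sg.
pose d t := (1 - gamma) * rsum (fun s => mu s * Rs s t).
have hd : forall t, d t <= C * nu t.
  move=> t; have h := @le_fmax _ (fun t => d t / nu t) t.
  change (fmax (fun t => d t / nu t)) with C in h.
  have hn := Hnupos t.
  have -> : d t = d t / nu t * nu t by field; lra.
  by apply: Rmult_le_compat_r => //; lra.
have hR0 := @res_entry_ge0 sg hs.
have hR1 := @res_sum sg hs.
have hds : rsum d = 1.
  rewrite /d rsumZ (@rsum_swap _ _ (fun t s => mu s * Rs s t)).
  have e : forall s, rsum (fun t => mu s * Rs s t) = mu s * (1 / (1 - gamma)).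
    by move=> s; rewrite rsumZ hR1.
  rewrite (rsum_ext e) (rsum_ext (fun s => Rmult_comm _ _)) rsumZ Hmu.2; field; lra.
split.
  apply: Rnot_le_lt => hC.
  have : rsum d <= rsum (fun _ : S => 0).
    apply: rsum_le => t; apply: Rle_trans (hd t) _.
    have := Hnupos t; nra.
  rewrite hds /rsum big1 //; lra.
pose w s t := (1 - gamma) * Rs s t.
have hw0 : forall s t, 0 <= w s t by move=> s t; apply: Rmult_le_pos; [lra|exact: hR0].
have hw1 : forall s, rsum (w s) = 1 by move=> s; rewrite /w rsumZ hR1; field; lra.
have hj : forall s, rpow ((1 - gamma) * rsum (fun t => Rs s t * Rabs (g t))) q
            <= rsum (fun t => w s t * rpow (Rabs (g t)) q).
  move=> s; rewrite -rsumZ.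
  have e : forall t, (1 - gamma) * (Rs s t * Rabs (g t)) = w s t * Rabs (g t) by move=> t; rewrite /w; ring.
  rewrite (rsum_ext e); apply: jensen; [exact: hq|exact: (hw0 s)|exact: (hw1 s)|move=> t; exact: Rabs_pos].
apply: Rle_trans (_ : rsum (fun s => mu s * rsum (fun t => w s t * rpow (Rabs (g t)) q)) <= _).
  apply: rsum_le => s; apply: Rmult_le_compat_l; [exact: Hmu.1|exact: hj].
have e : forall s, mu s * rsum (fun t => w s t * rpow (Rabs (g t)) q) =
   rsum (fun t => (mu s * Rs s t) * ((1 - gamma) * rpow (Rabs (g t)) q)).
  by move=> s; rewrite -rsumZ; apply: rsum_ext => t; rewrite /w; ring.
rewrite (rsum_ext e) (@rsum_swap _ _ (fun s t => (mu s * Rs s t) * ((1 - gamma) * rpow (Rabs (g t)) q))).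
rewrite -rsumZ; apply: rsum_le => t.
rewrite (rsum_ext (fun s => Rmult_comm _ _)) rsumZ.
have : d t * rpow (Rabs (g t)) q <= C * nu t * rpow (Rabs (g t)) q.
  apply: Rmult_le_compat_r; [exact: rpow_ge0|exact: hd].
rewrite /d; lra.
Qed.
End G3.

Theorem lemma1
  (N : nat) (S : finType) (A : 'I_N -> S -> finType)
  (HA : forall (j : 'I_N) (s : S), leq 1 #|A j s|)
  (r : 'I_N -> forall s : S, jact A s -> R)
  (p : forall s : S, jact A s -> S -> R)
  (Hp : forall (s : S) (a : jact A s), is_distr (p s a))
  (gamma : R) (Hg0 : 0 <= gamma) (Hg1 : gamma < 1)
  (q q' : R) (Hq : 1 < q) (Hq' : 1 < q') (Hqq' : 1 / q + 1 / q' = 1)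
  (mu nu : S -> R) (Hmu : is_distr mu) (Hnu : is_distr nu)
  (Hnupos : forall s, 0 < nu s)
  (pi : jstrat A) (Hpi : is_jstrategy pi)
  (i : 'I_N)
  (pistar : jstrat A) (Hpistar : is_jstrategy pistar)
  (Hpistar_mi : forall j : 'I_N, j != i -> pistar j = pi j)
  (Hbest : forall sigma : jstrat A, is_jstrategy sigma ->
             (forall j : 'I_N, j != i -> sigma j = pi j) ->
             forall s : S, value r p gamma i sigma s <= value r p gamma i pistar s)
  (v : S -> R) :
  normp mu q (fun s => value r p gamma i pistar s - value r p gamma i pi s)
  <= 1 / (1 - gamma)
     * rpow (rpow (Cinf p gamma mu nu pistar) (q' / q)
             + rpow (Cinf p gamma mu nu pi) (q' / q)) (1 / q')
     * rpow (rpow (normp nu q (fun s => Tstar r p gamma i pi v s - v s)) q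
             + rpow (normp nu q (fun s => Tpi r p gamma i pi v s - v s)) q) (1 / q).
Proof.
have hq1 : 1 <= q by lra.
set V1 := value r p gamma i pistar. set V2 := value r p gamma i pi.
set g1 := (fun s => Tstar r p gamma i pi v s - v s).
set g2 := (fun s => Tpi r p gamma i pi v s - v s).
set R1 := resolvent p gamma pistar. set R2 := resolvent p gamma pi.
set C1 := Cinf p gamma mu nu pistar. set C2 := Cinf p gamma mu nu pi.
have [hC1 hX] := @part _ _ _ _ _ Hp Hg0 Hg1 _ _ _ Hmu Hnupos hq1 _ Hpistar g1.
have [hC2 hY] := @part _ _ _ _ _ Hp Hg0 Hg1 _ _ _ Hmu Hnupos hq1 _ Hpi g2.
rewrite -/R1 -/C1 in hX hC1. rewrite -/R2 -/C2 in hY hC2.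
set X := rsum (fun t => nu t * rpow (Rabs (g1 t)) q) in hX *.
set Y := rsum (fun t => nu t * rpow (Rabs (g2 t)) q) in hY *.
have hR1 := @res_entry_ge0 _ _ _ _ _ Hp Hg0 Hg1 _ Hpistar.
have hR2 := @res_entry_ge0 _ _ _ _ _ Hp Hg0 Hg1 _ Hpi.
rewrite -/R1 in hR1. rewrite -/R2 in hR2.
pose a s := (1 - gamma) * rsum (fun t => R1 s t * Rabs (g1 t)).
pose b s := (1 - gamma) * rsum (fun t => R2 s t * Rabs (g2 t)).
have ha : forall s, 0 <= a s.
  move=> s; apply: Rmult_le_pos; [lra|]; apply: rsum_ge0 => t; apply: Rmult_le_pos; [exact: hR1|exact: Rabs_pos].
have hb : forall s, 0 <= b s.
  move=> s; apply: Rmult_le_pos; [lra|]; apply: rsum_ge0 => t; apply: Rmult_le_pos; [exact: hR2|exact: Rabs_pos].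
have hdiff : forall s, Rabs (V1 s - V2 s) <= (a s + b s) / (1 - gamma).
  move=> s.
  have h0 : 0 <= V1 s - V2 s.
    have := Hbest pi Hpi (fun j _ => erefl) s; rewrite -/V1 -/V2; lra.
  rewrite Rabs_right; last lra.
  have e1 := @value_diff _ _ _ r p gamma Hp Hg0 Hg1 i _ Hpistar v s.
  have e2 := @value_diff _ _ _ r p gamma Hp Hg0 Hg1 i _ Hpi v s.
  rewrite -/V1 -/R1 in e1. rewrite -/V2 -/R2 in e2.
  have i1 : rsum (fun t => R1 s t * (Tpi r p gamma i pistar v t - v t)) <= rsum (fun t => R1 s t * Rabs (g1 t)).
    apply: rsum_le => t; apply: Rmult_le_compat_l; first exact: hR1.
    have := @Tpi_le_Tstar _ _ _ r p gamma pi pistar i Hpistar Hpistar_mi v t.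
    have := Rle_abs (g1 t); rewrite /g1; lra.
  have i2 : - rsum (fun t => R2 s t * g2 t) <= rsum (fun t => R2 s t * Rabs (g2 t)).
    rewrite -(Rmult_1_l (rsum _)) Ropp_mult_distr_l -rsumZ.
    apply: rsum_le => t.
    have := hR2 s t; have := Rle_abs (- g2 t); rewrite Rabs_Ropp; nra.
  have -> : (a s + b s) / (1 - gamma) = rsum (fun t => R1 s t * Rabs (g1 t)) + rsum (fun t => R2 s t * Rabs (g2 t)).
    rewrite /a /b; field; lra.
  rewrite /V1 /V2 /g2 /= in e1 e2 i2 *; lra.
set c := 1 / (1 - gamma).
have hc : 0 < c by rewrite /c; apply: Rdiv_lt_0_compat; lra.
set K := rpow C1 (q' / q) + rpow C2 (q' / q).
have hK : 0 < K by rewrite /K; have := @rpow_gt0 C1 (q' / q) hC1; have := @rpow_gt0 C2 (q' / q) hC2; lra.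
have hpt : forall s, rpow (Rabs (V1 s - V2 s)) q <=
    rpow c q * (rpow K (q - 1) * (rpow (a s) q / C1 + rpow (b s) q / C2)).
  move=> s. apply: Rle_trans (@rpow_le _ _ q (Rabs_pos _) (hdiff s) ltac:(lra)) _.
  have -> : (a s + b s) / (1 - gamma) = c * (a s + b s) by rewrite /c; field; lra.
  rewrite rpow_mul; [|lra|have := ha s; have := hb s; lra].
  apply: Rmult_le_compat_l; first exact: rpow_ge0.
  exact: two_point (ha s) (hb s) hC1 hC2 Hq Hq' Hqq'.
set k := rpow c q * rpow K (q - 1).
have hk : 0 < k by rewrite /k; apply: Rmult_lt_0_compat; apply: rpow_gt0.
have hX' : rsum (fun s => mu s * rpow (a s) q) <= C1 * X := hX.
have hY' : rsum (fun s => mu s * rpow (b s) q) <= C2 * Y := hY.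
have hsum : rsum (fun s => mu s * rpow (Rabs (V1 s - V2 s)) q) <= k * (X + Y).
  apply: Rle_trans (_ : rsum (fun s => mu s * (rpow c q * (rpow K (q - 1) * (rpow (a s) q / C1 + rpow (b s) q / C2)))) <= _).
    apply: rsum_le => s; apply: Rmult_le_compat_l; [exact: Hmu.1 | exact: hpt].
  have e : forall s, mu s * (rpow c q * (rpow K (q - 1) * (rpow (a s) q / C1 + rpow (b s) q / C2)))
     = (k / C1) * (mu s * rpow (a s) q) + (k / C2) * (mu s * rpow (b s) q).
    by move=> s; rewrite /k; field; lra.
  rewrite (rsum_ext e) rsumD !rsumZ.
  have h1 := Rmult_le_compat_l (k / C1) _ _ (Rlt_le _ _ (Rdiv_lt_0_compat _ _ hk hC1)) hX'.
  have h2 := Rmult_le_compat_l (k / C2) _ _ (Rlt_le _ _ (Rdiv_lt_0_compat _ _ hk hC2)) hY'.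
  have -> : k * (X + Y) = k / C1 * (C1 * X) + k / C2 * (C2 * Y) by field; lra.
  lra.
have hX0 : 0 <= X by apply: rsum_ge0 => t; apply: Rmult_le_pos; [exact: Hnu.1|exact: rpow_ge0].
have hY0 : 0 <= Y by apply: rsum_ge0 => t; apply: Rmult_le_pos; [exact: Hnu.1|exact: rpow_ge0].
have hq0 : 0 < q by lra.
have nX : rpow (normp nu q g1) q = X.
  by rewrite /normp -/X rpow_rpow // (_ : 1 / q * q = 1) ?rpow_1 //; field; lra.
have nY : rpow (normp nu q g2) q = Y.
  by rewrite /normp -/Y rpow_rpow // (_ : 1 / q * q = 1) ?rpow_1 //; field; lra.
rewrite nX nY /normp.
have hS0 : 0 <= rsum (fun s => mu s * rpow (Rabs (V1 s - V2 s)) q).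
  by apply: rsum_ge0 => t; apply: Rmult_le_pos; [exact: Hmu.1|exact: rpow_ge0].
apply: Rle_trans (@rpow_le _ _ (1 / q) hS0 hsum ltac:(left; apply: Rdiv_lt_0_compat; lra)) _.
have hcq : 0 <= rpow c q by apply: rpow_ge0.
have hKq : 0 <= rpow K (q - 1) by apply: rpow_ge0.
rewrite /k rpow_mul; [|apply: Rmult_le_pos => //|lra].
rewrite rpow_mul // !rpow_rpow; try lra.
rewrite (_ : q * (1 / q) = 1); last by field; lra.
rewrite (_ : (q - 1) * (1 / q) = 1 / q'); last first.
  have : 1 / q' = 1 - 1 / q by lra.
  move=> ->; field; lra.
rewrite rpow_1; last lra.
by right.
Qed.
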